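(* $G^{p}$ is a subspace of $L^{p}(\mu)$.
   Context: Let $\mathcal{B}$ be the Borel $\sigma$-algebra of $\mathbb{R}$, $\lambda$ the Lebesgue measure, and $\mathcal{B}_{\infty}$ the $\sigma$-algebra on $\mathbb{R}^{\mathbb{N}}$ generated by the cylinder sets $\prod_{i=1}^{m}C_{i}\times\prod_{i=m+1}^{\infty}\mathbb{R}$ with $C_i\in\mathcal{B}$, $m\in\mathbb{N}$. Let $\mathcal{F}(\mathcal{B},\lambda)$ be the set of finite rectangles $\prod_{i\in\mathbb{N}}C_{i}$ with $C_i\in\mathcal{B}$ and $\prod_{i}\lambda(C_i)\in[0,\infty)$, with $\mathrm{vol}(\prod_{i}C_i):=\prod_i\lambda(C_i)$. The measure $\mu$ is the restriction to $\mathcal{B}_{\infty}$ of the outer measure $\mu^{\ast}(A):=\inf\{\sum_{n}\mathrm{vol}(\mathscr{C}_{n}) : \mathscr{C}_{n}\in\mathcal{F}(\mathcal{B},\lambda),\ A\subset\bigcup_{n}\mathscr{C}_{n}\}$ ($\inf\varnothing=\infty$). Fix $1\le p<\infty$. Let $I:=\mathbb{Z}^{\mathbb{N}}$ and, for $\mathfrak{a}=(a_n)\in I$, $\mathcal{C}_{\mathfrak{a}}:=\prod_{n\in\mathbb{N}}[a_{n},a_{n}+1)$. For $f\in L^p(\mu)$ let $\mathcal{O}_{f}:=\{\mathfrak{a}\in I : \int_{\mathcal{C}_{\mathfrak{a}}}|f|^{p}\,d\mu\neq 0\}$ (a countable set) and $\mathcal{F}_{f}:=\bigsqcup_{\mathfrak{a}\in\mathcal{O}_{f}}\mathcal{C}_{\mathfrak{a}}$.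 Define $G^{p}:=\{f\in L^{p}(\mu) : \int_{\mathbb{R}^{\mathbb{N}}}|f|^{p}\,d\mu=\sum_{\mathfrak{a}\in\mathcal{O}_{f}}\int_{\mathcal{C}_{\mathfrak{a}}}|f|^{p}\,d\mu=\int_{\mathcal{F}_{f}}|f|^{p}\,d\mu\}$. *)

(* Defs.v *)
From HB Require Import structures.
From mathcomp Require Import all_boot all_order all_algebra.
From mathcomp Require Import all_classical all_reals all_analysis.
Set Implicit Arguments. Unset Strict Implicit. Unset Printing Implicit Defensive.
Import Order.TTheory GRing.Theory Num.Theory.
Import numFieldNormedType.Exports.
Local Open Scope classical_set_scope.
Local Open Scope ring_scope.

(* Sequences x = (x_n)_{n in N} in R^N are functions nat -> R
   (index set N represented by nat, starting at 0). *)

Section BakerMeasure.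
Variable R : realType.

Definition borel (C : set R) : Prop := @measurable _ (measurableTypeR R) C.
Definition leb (C : set R) : \bar R := @lebesgue_measure R C.

Definition rect (C : nat -> set R) : set (nat -> R) :=
  [set x | forall i, C i (x i)].

Definition cylinders : set (set (nat -> R)) :=
  [set A | exists (m : nat) (C : nat -> set R),
     (forall i, borel (C i)) /\ A = [set x | forall i, (i < m)%N -> C i (x i)]].

Definition RN := g_sigma_algebraType cylinders.

Definition partial_vol (C : nat -> set R) (n : nat) : \bar R :=
  (\prod_(i < n) leb (C i))%E.

Definition finite_rect (C : nat -> set R) : Prop :=
  (forall i, borel (C i)) /\
  exists l : R, partial_vol C @ \oo --> l%:E.

Definition vol (C : nat -> set R) : \bar R := lim (partial_vol C @ \oo).

(* outer measure mu^* (inf of empty set is +oo) *)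
Definition mu_star (A : set (nat -> R)) : \bar R :=
  ereal_inf [set (\sum_(0 <= n <oo) vol (S n))%E | S in
     [set S : nat -> nat -> set R |
        (forall n, finite_rect (S n)) /\ A `<=` \bigcup_n rect (S n)]].

(* mu := restriction of mu^* to B_infinity (as a set function on RN; the
   integral only ever evaluates it on B_infinity-measurable sets) *)
Definition mu : set RN -> \bar R := fun A => mu_star A.

Definition cube (a : nat -> int) : set RN :=
  [set x | forall n, (a n)%:~R <= x n < (a n)%:~R + 1].

Definition pint (p : R) (f : RN -> R) (D : set RN) : \bar R :=
  (\int[mu]_(x in D) (`|f x| `^ p)%:E)%E.

Definition Lp (p : R) : set (RN -> R) :=
  [set f | measurable_fun setT f /\ (pint p f setT < +oo)%E].

Definition O_f (p : R) (f : RN -> R) : set (nat -> int) :=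
  [set a | pint p f (cube a) <> 0%E].

Definition F_f (p : R) (f : RN -> R) : set RN :=
  \bigcup_(a in O_f p f) cube a.

Definition Gp (p : R) : set (RN -> R) :=
  [set f | Lp p f /\
     pint p f setT = (\esum_(a in O_f p f) pint p f (cube a))%E /\
     (\esum_(a in O_f p f) pint p f (cube a))%E = pint p f (F_f p f)].

End BakerMeasure.

(* Main.v *)
Require Import Defs.
From HB Require Import structures.
From mathcomp Require Import all_boot all_order all_algebra.
From mathcomp Require Import all_classical all_reals all_analysis.
From mathcomp Require Import measurable_realfun finmap.
Import Order.TTheory GRing.Theory Num.Theory.
Import numFieldNormedType.Exports.
Set Implicit Arguments. Unset Strict Implicit. Unset Printing Implicit Defensive.
Local Open Scope classical_set_scope.
Local Open Scope ring_scope.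

Section PartA.
Variable R : realType.
Local Open Scope ereal_scope.

Lemma partial_vol_ge0 (C : nat -> set R) n : 0 <= partial_vol C n.
Proof. by apply: prode_ge0 => i _; exact: measure_ge0. Qed.

Lemma vol_ge0 (C : nat -> set R) : finite_rect C -> 0 <= vol C.
Proof.
move=> [_ [l hl]]; rewrite /vol; apply: lime_ge; first by apply/cvg_ex; exists l%:E.
by apply: nearW => n; exact: partial_vol_ge0.
Qed.

Lemma vol_cvg (C : nat -> set R) : finite_rect C -> partial_vol C @ \oo --> vol C.
Proof. by move=> [_ [l hl]]; rewrite /vol (cvg_lim _ hl). Qed.

Lemma rect_eq (C C' : nat -> set R) : rect C = rect C' -> (exists x, rect C x) -> C = C'.
Proof.
move=> e [y Cy]; have Cy' : rect C' y by rewrite -e.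
apply/funext => i; apply/seteqP; split => t Ct.
- pose z := fun k => if k == i then t else y k.
  have : rect C z by move=> k; rewrite /z; case: eqP => [->|_]//; exact: Cy.
  by rewrite e => /(_ i); rewrite /z eqxx.
- pose z := fun k => if k == i then t else y k.
  have : rect C' z by move=> k; rewrite /z; case: eqP => [->|_]//; exact: Cy'.
  by rewrite -e => /(_ i); rewrite /z eqxx.
Qed.

Definition Cz : nat -> set R := fun _ => set0.

Lemma finite_rect_Cz : finite_rect Cz /\ vol Cz = 0.
Proof.
have h : partial_vol Cz @ \oo --> 0%:E.
  apply: cvg_near_cst; exists 1%N => // -[|n] //= _.
  by rewrite /partial_vol big_ord_recl /leb /Cz measure0 mul0e.
split; first by split; [move=> i; exact: measurable0 | exists 0%R].
by rewrite /vol (cvg_lim _ h).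
Qed.

Definition TD := g_sigma_algebraType (@setT (set (nat -> R))).

Definition mu' (B : set TD) : \bar R :=
  ereal_inf [set vol C | C in [set C | finite_rect C /\ rect C = B]].

Lemma mu'_ge0 B : 0 <= mu' B.
Proof. by apply: le_ereal_inf_tmp => _ [C [fC _] <-]; exact: vol_ge0. Qed.

Lemma mu'_le B C : finite_rect C -> rect C = B -> mu' B <= vol C.
Proof. by move=> fC e; apply: ereal_inf_lbound; exists C. Qed.

Lemma mu'0 : mu' set0 = 0.
Proof.
apply/eqP; rewrite eq_le mu'_ge0 andbT.
have [fz vz] := finite_rect_Cz; rewrite -vz; apply: mu'_le => //.
by apply/seteqP; split => x // /(_ 0%N).
Qed.

Lemma mu'_attain B : mu' B < +oo ->
  exists C, [/\ finite_rect C, rect C = B & vol C = mu' B].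
Proof.
move=> Bfin.
have [->|/set0P[x Bx]] := eqVneq B set0.
  have [fz vz] := finite_rect_Cz; exists Cz; split => //; last by rewrite mu'0.
  by apply/seteqP; split => y // /(_ 0%N).
have : [set vol C | C in [set C | finite_rect C /\ rect C = B]] !=set0.
  apply/set0P; apply/negP => /eqP e; move: Bfin; rewrite /mu' e ereal_inf0.
  by rewrite ltxx.
move=> [_ [C0 [f0 e0] _]]; exists C0; split => //.
rewrite /mu' [X in ereal_inf X](_ : _ = [set vol C0]) ?ereal_inf1//.
apply/seteqP; split => [_ [C [fC eC] <-]|_ ->]; last by exists C0.
rewrite /= (rect_eq (C:=C) (C':=C0)) //; first by rewrite eC e0.
by exists x; rewrite eC.
Qed.

Lemma mTD (A : set TD) : measurable A.
Proof. exact: sub_sigma_algebra. Qed.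

Lemma mu_star_ext (A : set (nat -> R)) : mu_star A = mu_ext mu' A.
Proof.
apply/eqP; rewrite eq_le; apply/andP; split.
- apply: le_ereal_inf_tmp => _ [F [mF AF] <-].
  have [[k kinf]|] := pselect (exists k, mu' (F k) = +oo).
    rewrite (@eseries_pinfty _ _ _ k) ?leey// => n _.
    by rewrite gt_eqF// (lt_le_trans _ (mu'_ge0 _)).
  move=> /forallNP hF.
  have : forall k, exists C, [/\ finite_rect C, rect C = F k & vol C = mu' (F k)].
    by move=> k; apply: mu'_attain; rewrite ltey; apply/eqP; exact: hF.
  move=> /choice[G HG]; apply: ereal_inf_lbound; exists G.
    split; first by move=> n; have [] := HG n.
    by move=> x /AF [k _ Fkx]; exists k => //; have [_ -> _] := HG k.
  by apply: eq_eseriesr => k _; have [_ _ ->] := HG k.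
- apply: le_ereal_inf_tmp => _ [S [fS AS] <-].
  apply: (@le_trans _ _ (\sum_(k <oo) mu' (rect (S k)))).
    apply: ereal_inf_lbound; exists (fun k => rect (S k)) => //.
    by split => // k; exact: mTD.
  apply: lee_nneseries => [k _ _|k _]; first exact: mu'_ge0.
  exact: mu'_le.
Qed.

End PartA.

Section PartB.
Variable R : realType.
Local Open Scope ereal_scope.

Lemma split_lim (a1 a2 : \bar R) (Q : nat -> \bar R) (L : R) :
  0 <= a1 -> 0 <= a2 -> (forall n, 0 <= Q n) ->
  (fun n => (a1 + a2) * Q n) @ \oo --> L%:E ->
  exists L1 L2 : R, [/\ (fun n => a1 * Q n) @ \oo --> L1%:E,
     (fun n => a2 * Q n) @ \oo --> L2%:E & (L1 + L2)%R = L].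
Proof.
move=> a10 a20 Q0 h.
have [aoo|afin] := eqVneq (a1 + a2) +oo.
  have ev : \forall n \near \oo, Q n = 0.
    move/fine_cvgP: h => [+ _]; apply: filterS => n.
    rewrite aoo; have [->|Qn] := eqVneq (Q n) 0 => //.
    by rewrite gt0_mulye // lt0e Qn Q0.
  have h0 : (fun n => (a1 + a2) * Q n) @ \oo --> 0%:E.
    by apply: cvg_near_cst; apply: filterS ev => n ->; rewrite mule0.
  have eL : L = 0%R.
    by apply: EFin_inj; exact: cvg_unique _ h h0.
  subst L; exists 0%R, 0%R; split; last by rewrite addr0.
    by apply: cvg_near_cst; apply: filterS ev => n ->; rewrite mule0.
  by apply: cvg_near_cst; apply: filterS ev => n ->; rewrite mule0.
move: a1 a2 a10 a20 afin h => [r1| |] [r2| |] //= r10 r20 _ h.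
rewrite lee_fin in r10; rewrite lee_fin in r20.
have [r0|rpos] := eqVneq (r1 + r2)%R 0%R.
  have e1 : r1 = 0%R by apply/eqP; rewrite eq_le r10 andbT; rewrite -r0 lerDl.
  have e2 : r2 = 0%R by apply/eqP; rewrite eq_le r20 andbT; rewrite -r0 lerDr.
  subst r1 r2.
  have h0 : (fun n => (0%:E + 0%:E) * Q n) @ \oo --> 0%:E.
    by apply: cvg_near_cst; apply: nearW => n; rewrite adde0 mul0e.
  have eL : L = 0%R by apply: EFin_inj; exact: cvg_unique _ h h0.
  subst L; exists 0%R, 0%R; split; last by rewrite addr0.
    by apply: cvg_near_cst; apply: nearW => n; rewrite mul0e.
  by apply: cvg_near_cst; apply: nearW => n; rewrite mul0e.
have rgt0 : (0 < r1 + r2)%R by rewrite lt0r rpos addr_ge0.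
have hQ : Q @ \oo --> ((r1 + r2)^-1 * L)%:E.
  have := cvgeZl (y := ((r1 + r2)^-1)%:E) isT h.
  rewrite -EFinM; apply: cvg_trans; apply: near_eq_cvg; apply: nearW => n /=.
  by rewrite -EFinD muleA -EFinM mulVf ?rpos// mul1e.
exists (r1 * ((r1 + r2)^-1 * L))%R, (r2 * ((r1 + r2)^-1 * L))%R; split.
- by rewrite EFinM; exact: cvgeZl.
- by rewrite EFinM; exact: cvgeZl.
- by rewrite -mulrDl mulrA mulfV ?rpos// mul1r.
Qed.

Definition Cmod (C : nat -> set R) j (D : set R) : nat -> set R :=
  fun i => if i == j then D else C i.

Definition Qp (C : nat -> set R) j n : \bar R :=
  \prod_(i < n | (val i != j)%N) leb (C i).

Lemma partial_vol_mod C j D n : (j < n)%N ->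
  partial_vol (Cmod C j D) n = leb D * Qp C j n.
Proof.
move=> jn; rewrite /partial_vol (bigD1 (Ordinal jn)) //= /Cmod eqxx; congr (_ * _).
apply: eq_big => i; first by rewrite -val_eqE.
by rewrite -val_eqE /= => /negbTE ->.
Qed.

Lemma Cmod_id C j : Cmod C j (C j) = C.
Proof. by apply/funext => i; rewrite /Cmod; case: eqP => [->|]. Qed.

Lemma finite_rect_split C j B : finite_rect C -> borel B ->
  [/\ finite_rect (Cmod C j (C j `&` B)), finite_rect (Cmod C j (C j `&` ~` B))
    & vol (Cmod C j (C j `&` B)) + vol (Cmod C j (C j `&` ~` B)) = vol C].
Proof.
move=> [bC [L hL]] bB.
have mCB : borel (C j `&` B) by apply: measurableI; [exact: bC|exact: bB].
have mCnB : borel (C j `&` ~` B) by apply: measurableI; [exact: bC|apply: measurableC; exact: bB].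
have ej : leb (C j) = leb (C j `&` B) + leb (C j `&` ~` B).
  rewrite /leb -measureU //; last by rewrite setIACA setICr !setI0.
  by rewrite -setIUr setUCr setIT.
have evj : \forall n \near \oo, (j < n)%N by exists j.+1.
have h : (fun n => (leb (C j `&` B) + leb (C j `&` ~` B)) * Qp C j n) @ \oo --> L%:E.
  apply: cvg_trans hL; apply: near_eq_cvg; apply: filterS evj => n jn.
  by rewrite -ej -partial_vol_mod // Cmod_id.
have [L1 [L2 [h1 h2 hs]]] := split_lim (measure_ge0 _ _) (measure_ge0 _ _)
  (fun n => prode_ge0 _ (fun i _ => measure_ge0 _ _)) h.
have h1' : partial_vol (Cmod C j (C j `&` B)) @ \oo --> L1%:E.
  apply: cvg_trans h1; apply: near_eq_cvg; apply: filterS evj => n jn.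
  by rewrite partial_vol_mod.
have h2' : partial_vol (Cmod C j (C j `&` ~` B)) @ \oo --> L2%:E.
  apply: cvg_trans h2; apply: near_eq_cvg; apply: filterS evj => n jn.
  by rewrite partial_vol_mod.
have bm D : borel D -> forall i, borel (Cmod C j D i).
  by move=> bD i; rewrite /Cmod; case: eqP.
split; first by split; [exact: bm | exists L1].
  by split; [exact: bm | exists L2].
by rewrite /vol (cvg_lim (@ereal_hausdorff R) h1') (cvg_lim (@ereal_hausdorff R) h2') (cvg_lim (@ereal_hausdorff R) hL) -EFinD hs.
Qed.

End PartB.

Section PartC.
Variable R : realType.
Local Open Scope ereal_scope.

Definition ostar : set (nat -> R) -> \bar R := fun A => mu_star A.

Lemma ostar0 : ostar set0 = 0.
Proof. by rewrite /ostar mu_star_ext; exact: (mu_ext0 (@mu'0 R) (@mu'_ge0 R)). Qed.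

Lemma ostar_ge0 A : 0 <= ostar A.
Proof. by rewrite /ostar mu_star_ext; exact: (mu_ext_ge0 (@mu'_ge0 R)). Qed.

Lemma le_ostar : {homo ostar : A B / A `<=` B >-> A <= B}.
Proof. by move=> A B AB; rewrite /ostar !mu_star_ext; exact: le_mu_ext. Qed.

Lemma ostar_sub : sigma_subadditive ostar.
Proof.
move=> F; rewrite /ostar mu_star_ext.
rewrite (eq_eseriesr (g := fun i => mu_ext (@mu' R) (F i))); last by move=> i _; rewrite mu_star_ext.
exact: (mu_ext_sigma_subadditive (@mu'_ge0 R)).
Qed.

HB.instance Definition _ := isOuterMeasure.Build R (nat -> R) ostar
  ostar0 ostar_ge0 le_ostar ostar_sub.

Definition Zset j (B : set R) : set (nat -> R) := [set x | B (x j)].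

Lemma cara_Z j B : borel B -> ostar.-caratheodory (Zset j B).
Proof.
move=> bB; apply: le_caratheodory_measurable => X.
change (ostar (X `&` Zset j B) + ostar (X `&` ~` Zset j B) <= mu_star X).
rewrite [in leRHS]/mu_star; apply: le_ereal_inf_tmp => _ [S [fS XS] <-].
pose T1 k := Cmod (S k) j (S k j `&` B).
pose T2 k := Cmod (S k) j (S k j `&` ~` B).
have h k := finite_rect_split j (fS k) bB.
have fT1 k : finite_rect (T1 k) by case: (h k).
have fT2 k : finite_rect (T2 k) by case: (h k).
have eT k : vol (T1 k) + vol (T2 k) = vol (S k) by case: (h k).
have l1 : ostar (X `&` Zset j B) <= \sum_(k <oo) vol (T1 k).
  apply: ereal_inf_lbound; exists T1 => //; split => //.
  move=> x [/XS [k _ Skx] Bx]; exists k => // i; rewrite /T1 /Cmod.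
  by case: eqP => [->|_]; [split|].
have l2 : ostar (X `&` ~` Zset j B) <= \sum_(k <oo) vol (T2 k).
  apply: ereal_inf_lbound; exists T2 => //; split => //.
  move=> x [/XS [k _ Skx] Bx]; exists k => // i; rewrite /T2 /Cmod.
  by case: eqP => [->|_]; [split|].
apply: (le_trans (leeD l1 l2)); rewrite -nneseriesD; last 2 first.
- by move=> k _ _; apply: vol_ge0.
- by move=> k _ _; apply: vol_ge0.
by apply: lee_nneseries => [k _ _|k _]; [apply: adde_ge0; apply: vol_ge0 | rewrite eT].
Qed.

Lemma cara_cyl A : cylinders A -> ostar.-caratheodory A.
Proof.
move=> [m [C [bC ->]]]; elim: m => [|m IH].
  rewrite (_ : [set x : nat -> R | forall i, (i < 0)%N -> C i (x i)] = ~` set0); last by apply/seteqP; split => x // _ i; case: i.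
  exact/caratheodory_measurable_setC/caratheodory_measurable_set0.
rewrite (_ : [set x : nat -> R | forall i, (i < m.+1)%N -> C i (x i)] = [set x : nat -> R | forall i, (i < m)%N -> C i (x i)]
   `&` Zset m (C m)); last first.
  apply/seteqP; split => x.
    by move=> H; split; [move=> i im; apply: H; exact: ltnW | apply: H].
  move=> [H1 H2] i; rewrite ltnS leq_eqVlt => /orP[/eqP -> //|]; exact: H1.
exact: caratheodory_measurable_setI IH (cara_Z _ (bC m)).
Qed.

Lemma cara_RN (A : set (RN R)) : measurable A -> ostar.-caratheodory A.
Proof.
move=> mA; apply: (smallest_sub _ _ mA) => [|B]; last exact: cara_cyl.
split.
- exact: caratheodory_measurable_set0.
- by move=> B mB; rewrite setTD; exact: caratheodory_measurable_setC.
- by move=> F mF; exact: caratheodory_measurable_bigcup.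
Qed.

Lemma mu0' : mu (set0 : set (RN R)) = 0.
Proof. exact: ostar0. Qed.

Lemma mu_ge0' (A : set (RN R)) : 0 <= mu A.
Proof. exact: ostar_ge0. Qed.

Lemma mu_sigma : semi_sigma_additive (@mu R).
Proof.
move=> F mF tF mU.
exact: (@caratheodory_measure_sigma_additive R (nat -> R) ostar F
  (fun i => cara_RN (mF i)) tF (cara_RN mU)).
Qed.

HB.instance Definition _ := isMeasure.Build _ (RN R) R (@mu R) mu0' mu_ge0' mu_sigma.

End PartC.


Section PartD.
Variable R : realType.
Implicit Types (f h : RN R -> R).

Lemma cube_meas (a : nat -> int) : measurable (cube a : set (RN R)).
Proof.
rewrite (_ : cube a = \bigcap_n [set x : RN R | (a n)%:~R <= x n < (a n)%:~R + 1]); last first.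
  by apply/seteqP; split=> [x H n _|x H n]; [exact: H|exact: H n I].
apply: bigcapT_measurable => n; apply: sub_sigma_algebra.
exists n.+1, (fun i => if i == n then [set r : R | (a n)%:~R <= r < (a n)%:~R + 1] else setT).
split.
  move=> i; rewrite /borel; case: eqP => _; last exact: measurableT.
  rewrite (_ : [set r | _] = [set` `[(a n)%:~R, (a n)%:~R + 1[%R]); first exact: measurable_itv.
  by apply/seteqP; split => r /=; rewrite in_itv.
apply/seteqP; split => x /=.
  by move=> H i _; case: eqP => // ->.
by move=> /(_ n (ltnSn n)); rewrite eqxx.
Qed.

Lemma cube_disj (a b : nat -> int) : a <> b -> cube a `&` cube b = (set0 : set (RN R)).
Proof.
move=> ab; apply/seteqP; split => // x [Ha Hb]; apply: ab; apply/funext => n.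
have /andP[a1 a2] := Ha n; have /andP[b1 b2] := Hb n.
have h1 : (a n < b n + 1)%R.
  by rewrite -(ltr_int R) intrD; apply: (le_lt_trans a1 b2).
have h2 : (b n < a n + 1)%R.
  by rewrite -(ltr_int R) intrD; apply: (le_lt_trans b1 a2).
by apply/eqP; rewrite eq_le -!ltzD1 h1 h2.
Qed.

End PartD.

Lemma enum_countable (J : set (nat -> int)) : countable J ->
  exists e : nat -> (nat -> int), exists P : set nat, J = e @` P /\ set_inj P e.
Proof.
move=> /countable_injP[f injf]; exists (pinv_ (fun=> fun=> 0%R) J f), (f @` J); split.
  by rewrite injpinv_image.
move=> _ _ /set_mem[a Ja <-] /set_mem[b Jb <-] /= e.
by rewrite (@pinvKV _ _ (fun=> fun=> 0%R) J f injf a (mem_set Ja)) (@pinvKV _ _ (fun=> fun=> 0%R) J f injf b (mem_set Jb)) in e; rewrite e.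
Qed.

Section PartE.
Variable R : realType.
Variable p : R.
Local Open Scope ereal_scope.

Lemma mpow (h : RN R -> R) : measurable_fun setT h ->
  measurable_fun [set: RN R] (fun x : RN R => ((`|h x| `^ p)%:E : \bar R)).
Proof.
move=> mh; apply/measurable_EFinP.
apply: (measurableT_comp (measurable_powR p)).
by apply: measurableT_comp => //; exact: normr_measurable.
Qed.

Lemma pow_ge0 (h : RN R -> R) x : 0 <= (`|h x| `^ p)%:E.
Proof. by rewrite lee_fin powR_ge0. Qed.

Lemma UJ_meas (J : set (nat -> int)) : countable J ->
  measurable (\bigcup_(a in J) cube a : set (RN R)).
Proof.
move=> /enum_countable[e [P [-> _]]]; rewrite bigcup_image.
by apply: bigcup_measurable => i _; exact: cube_meas.
Qed.

Lemma pint_bigcup (h : RN R -> R) (J : set (nat -> int)) :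
  measurable_fun setT h -> countable J ->
  pint p h (\bigcup_(a in J) cube a) = \esum_(a in J) pint p h (cube a).
Proof.
move=> mh /enum_countable[e [P [-> injP]]].
rewrite esum_image // bigcup_image bigcup_mkcond /pint ge0_integral_bigcup //.
- transitivity (\sum_(i <oo | i \in P)
     \int[@mu R]_(x in cube (e i)) (`|h x| `^ p)%:E).
    rewrite [RHS]eseries_mkcond; apply: eq_eseriesr => i _.
    by case: ifPn => _ //; rewrite integral_set0.
  rewrite nneseries_esum ?set_mem_set// => n _; apply: integral_ge0 => x _.
  exact: pow_ge0.
- by move=> k; case: ifPn => _; [exact: cube_meas | exact: measurable0].
- exact: measurable_funTS (mpow mh).
- apply/trivIsetP => i j _ _ ij.
  have [iP|iP] := boolP (i \in P); last by rewrite set0I.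
  have [jP|jP] := boolP (j \in P); last by rewrite setI0.
  apply: cube_disj => eij; move/negP: ij; apply.
  by apply/eqP; apply: injP => //; rewrite -inE.
Qed.

End PartE.

Lemma esum_countable (R : realType) (T : choiceType) (S : set T) (g : T -> \bar R) :
  (forall x, S x -> (0 < g x)%E) -> (\esum_(x in S) g x < +oo)%E -> countable S.
Proof.
move=> g0 gfin.
have e0 : (0 <= \esum_(x in S) g x)%E by apply: esum_ge0 => x /g0/ltW.
pose Sn n := [set x | S x /\ ((n.+1%:R)^-1)%:E < g x]%E.
have -> : S = \bigcup_n Sn n.
  apply/seteqP; split => [x Sx|x [n _ []]//].
  have := g0 x Sx; case E : (g x) => [r| |] // r0.
    exists (Num.truncn (r^-1)) => //; split => //; rewrite E lte_fin.
    rewrite lte_fin in r0.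
    rewrite invf_plt ?unfold_in//= ?ltr0n//; exact: truncnS_gt.
  by exists 0%N => //; split => //; rewrite E ltry.
apply: bigcup_countable; first exact: countableP.
move=> n _; apply: finite_set_countable; apply: contrapT => infS.
move: gfin e0; case E : (\esum_(x in S) g x) => [r| |] // _ r0.
rewrite lee_fin in r0.
have [B BS MB] := infinite_set_fset (Num.truncn (r * n.+1%:R)).+1 infS.
suff : (((Num.truncn (r * n.+1%:R)).+1%:R / n.+1%:R)%:E <= r%:E)%E.
  rewrite lee_fin ler_pdivrMr ?ltr0n// => /(lt_le_trans (truncnS_gt _)).
  by rewrite ltxx.
rewrite -E; apply: esum_ge; exists [set` B].
  by split; [exact: finite_fset | by move=> x /BS []].
apply: (@le_trans _ _ (\sum_(i \in [set` B]) ((n.+1%:R)^-1)%:E)%E); last first.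
  by apply: lee_fsum => // x /BS [_ /ltW].
rewrite fsbig_finite//= set_fsetK sumEFin lee_fin big_const_seq /= count_predT.
rewrite iter_addr_0 -[leRHS]mulr_natl ler_pM2r ?invr_gt0 ?ltr0n// ler_nat.
exact: MB.
Qed.

Section PartF.
Variable R : realType.
Variable p : R.
Hypothesis p0 : p != 0.
Local Open Scope ereal_scope.

Local Notation U K := (\bigcup_(a in K) cube a : set (RN R)).

Lemma notU_cube (K : set (nat -> int)) a x : ~ K a -> cube a x -> ~ U K x.
Proof.
move=> Ka cx [b Kb cbx]; have ab : a <> b by move=> e; apply: Ka; rewrite e.
by have := @cube_disj R _ _ ab; rewrite -subset0 => /(_ x); apply.
Qed.

Lemma pint_ae0 (h : RN R -> R) (D : set (RN R)) : measurable D ->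
  measurable_fun setT h ->
  {ae (@mu R), forall x, D x -> h x = 0%R} -> pint p h D = 0.
Proof.
move=> mD mh hae; rewrite /pint (@ae_eq_integral _ _ _ _ D (cst 0)) ?integral0 //.
- exact: measurable_funTS (mpow p mh).
- by apply: filterS hae => x H Dx /=; rewrite H // normr0 powR0.
Qed.

Lemma Gp_of (h : RN R -> R) (K : set (nat -> int)) : measurable_fun setT h ->
  pint p h setT < +oo -> countable K ->
  {ae (@mu R), forall x, ~ U K x -> h x = 0%R} -> Gp p h.
Proof.
move=> mh hfin cK hae.
have z a : ~ K a -> pint p h (cube a) = 0.
  move=> Ka; apply: pint_ae0 => //; first exact: cube_meas.
  by apply: filterS hae => x H cx; apply: H; exact: notU_cube cx.
have OK : O_f p h `<=` K by move=> a Oa; apply: contrapT => Ka; apply: Oa; exact: z.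
have cO : countable (O_f p h) := sub_countable (subset_card_le OK) cK.
have eK : \esum_(a in K) pint p h (cube a) = \esum_(a in O_f p h) pint p h (cube a).
  rewrite esum_mkcond [RHS]esum_mkcond; apply: eq_esum => a _.
  have [Oa|Oa] := boolP (a \in O_f p h); first by rewrite mem_set //; exact: OK (set_mem Oa).
  case: ifPn => // _; apply: contrapT => H; move/negP: Oa; apply.
  exact: mem_set.
have mUK := UJ_meas cK.
split; first by split.
split; last by rewrite /F_f pint_bigcup.
rewrite -eK -pint_bigcup // /pint -[in LHS](setUCr (U K)).
rewrite ge0_integral_setU //; first last.
- by apply/disj_set2P; rewrite setICr.
- exact: measurable_funTS (mpow p mh).
- exact: measurableC.
have -> : \int[@mu R]_(x in ~` U K) (`|h x| `^ p)%:E = 0.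
  by apply: pint_ae0 => //; exact: measurableC.
by rewrite adde0.
Qed.

Lemma Gp_facts (f : RN R -> R) : Gp p f ->
  [/\ measurable_fun setT f, pint p f setT < +oo, countable (O_f p f) &
    {ae (@mu R), forall x, ~ U (O_f p f) x -> f x = 0%R}].
Proof.
move=> [[mf ffin] [e1 e2]].
have cO : countable (O_f p f).
  apply: (@esum_countable R _ _ (fun a => pint p f (cube a))); last by rewrite -e1.
  move=> a Oa; rewrite lt0e; apply/andP; split; first by apply/eqP.
  by apply: integral_ge0 => x _; exact: pow_ge0.
split => //.
set D := ~` U (O_f p f).
have mU := UJ_meas cO.
have mD : measurable D by exact: measurableC.
have eD : pint p f D = 0.
  have := e1; rewrite e2 /F_f /pint -[in X in X = _ -> _](setUCr (U (O_f p f))).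
  rewrite ge0_integral_setU //; first last.
  - by apply/disj_set2P; rewrite setICr.
  - exact: measurable_funTS (mpow p mf).
  have : pint p f (U (O_f p f)) \is a fin_num.
    rewrite ge0_fin_numE; first by rewrite -/(F_f p f) -e2 -e1.
    by apply: integral_ge0 => x _; exact: pow_ge0.
  rewrite /pint; move: (\int[@mu R]_(x in U (O_f p f)) _) => a.
  move: (\int[@mu R]_(x in D) _) => b afin.
  by move=> e; rewrite -(addeK b afin) [b + a]addeC e subee.
have : \int[@mu R]_(x in D) `|(`|f x| `^ p)%:E| = 0.
  by rewrite -eD /pint; apply: eq_integral => x _; rewrite gee0_abs // pow_ge0.
move/(ae_eq_integral_abs _ mD (measurable_funTS (mpow p mf))).
apply: filterS => x H Dx; have := H Dx; rewrite /= => -[].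
by move/powR_eq0_eq0/normr0_eq0.
Qed.

End PartF.

Lemma countableU2 T (A B : set T) : countable A -> countable B -> countable (A `|` B).
Proof.
move=> cA cB.
rewrite (_ : A `|` B = \bigcup_(b in [set: bool]) (if b then A else B)).
  by apply: bigcup_countable; [exact: countableP | case].
apply/seteqP; split => [x [Ax|Bx]|x [[] _ H]]; [by exists true|by exists false|by left|by right].
Qed.

Lemma powR_add_le (R : realType) (p : R) (x y : R) : 0 <= p ->
  `|x + y| `^ p <= 2 `^ p * (`|x| `^ p + `|y| `^ p).
Proof.
move=> p0.
pose m := Num.max `|x| `|y|.
have h1 : `|x + y| <= 2 * m.
  apply: (le_trans (ler_normD _ _)); rewrite mulr2n mulrDl mul1r.
  by apply: lerD; rewrite /m le_max lexx ?orbT.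
apply: (@le_trans _ _ ((2 * m) `^ p)).
  by apply: ge0_ler_powR => //; rewrite ?nnegrE // mulr_ge0 // le_max normr_ge0.
rewrite powRM // ?le_max ?normr_ge0 //; apply: ler_wpM2l; first exact: powR_ge0.
rewrite /m; case: (leP `|x| `|y|) => _.
  by rewrite lerDr powR_ge0.
by rewrite lerDl powR_ge0.
Qed.

Theorem lemma3p3 (R : realType) (p : R) (hp : 1 <= p) :
  Gp p `<=` Lp p /\
  Gp p (fun _ => 0) /\
  (forall f g, Gp p f -> Gp p g -> Gp p (f \+ g)) /\
  (forall (c : R) f, Gp p f -> Gp p (fun x => c * f x)).
Proof.
have p0 : p != 0 by rewrite gt_eqF // (lt_le_trans ltr01 hp).
have pge0 : 0 <= p by rewrite (le_trans ler01 hp).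
split; first by move=> f [].
split.
  apply: (@Gp_of R p p0 _ set0); first exact: measurable_cst.
  - rewrite /pint (_ : (fun x => _) = cst 0%E); first by rewrite integral0 ltry.
    by apply/funext => x; rewrite normr0 powR0.
  - exact: countable0.
  - by apply: aeW.
split.
  move=> f g /Gp_facts[mf ffin cf fae] /Gp_facts[mg gfin cg gae].
  apply: (@Gp_of R p p0 _ (O_f p f `|` O_f p g)).
  - exact: measurable_funD.
  - apply: (@le_lt_trans _ _ ((2 `^ p)%:E * (pint p f setT + pint p g setT))%E).
      have mF := mpow p mf; have mG := mpow p mg.
      rewrite /pint -ge0_integralD // -ge0_integralZl_EFin //; last first.
      all: try (by move=> x _; apply: adde_ge0; exact: pow_ge0).
      all: try exact: emeasurable_funD mF mG.
      all: try exact: powR_ge0.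
      apply: ge0_le_integral => //.
      all: try (by move=> x _; exact: pow_ge0).
      all: try exact: mpow (measurable_funD mf mg).
      all: try (by apply: emeasurable_funM => //; exact: emeasurable_funD mF mG).
      by move=> x _; rewrite -EFinD -EFinM lee_fin; exact: powR_add_le.
    by rewrite lte_mul_pinfty ?lee_fin ?powR_ge0 // lte_add_pinfty.
  - exact: countableU2.
  - apply: filterS2 fae gae => x Hf Hg nU /=.
    rewrite Hf ?Hg ?addr0 // => -[a Ha cax]; apply: nU; exists a => //; by [left|right].
move=> c f /Gp_facts[mf ffin cf fae].
apply: (@Gp_of R p p0 _ (O_f p f)) => //.
- exact: measurable_funM.
- rewrite /pint (_ : (fun x => _) = (fun x => (`|c| `^ p)%:E * (`|f x| `^ p)%:E)%E).
    rewrite ge0_integralZl_EFin //; last exact: mpow.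
    by rewrite lte_mul_pinfty // lee_fin powR_ge0.
  by apply/funext => x; rewrite normrM powRM // -EFinM.
- by apply: filterS fae => x H nU; rewrite H // mulr0.
Qed.
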